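(* Let $n\ge 6$ and let $CB_n$ be the set of chemical bicyclic graphs on $n$ vertices. Define the following subsets of $CB_n$ (in each, all $m_{i,j}$ not listed are $0$): $\beta_2$: $n_4=0,n_3=2,n_2=n-2,n_1=0$, $m_{2,3}=4$, $m_{3,3}=1$, $m_{2,2}=n-4$; $\beta_3$: $n_4=0,n_3=2,n_2=n-2,n_1=0$, $m_{2,3}=6$, $m_{2,2}=n-5$; $\beta_9$: $n_4=0,n_3=3,n_2=n-4,n_1=1$, $m_{1,2}=1$, $m_{2,3}=3$, $m_{3,3}=3$, $m_{2,2}=n-6$. Let $G_1\in\beta_2$, $G_2\in\beta_3$, $G_3\in\beta_9$, and let $G\in CB_n$ not belong to $\beta_2\cup\beta_3\cup\beta_9$. Then $SO(G_1)<SO(G_2)<SO(G_3)<SO(G)$.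
   Context: All graphs are simple and connected. A chemical graph is a graph with maximum degree at most $4$; a bicyclic graph is a connected graph with $n$ vertices and $n+1$ edges. $d_G(u)$ is the degree of $u$, $n_i$ the number of vertices of degree $i$, and $m_{i,j}$ the number of edges joining a vertex of degree $i$ to a vertex of degree $j$. The Sombor index is $SO(G)=\sum_{uv\in E(G)}\sqrt{d_G(u)^2+d_G(v)^2}$. *)

(* Defs.v *)
From mathcomp Require Import all_boot all_order all_algebra.
Set Implicit Arguments. Unset Strict Implicit. Unset Printing Implicit Defensive.
Import Order.TTheory GRing.Theory Num.Theory.

Section Graphs.
Variable n : nat.
Implicit Type e : rel 'I_n.

Definition simple_graph e : Prop := symmetric e /\ irreflexive e.

Definition connected_graph e : Prop := forall x y : 'I_n, connect e x y.

Definition deg e (x : 'I_n) : nat := #|[set y | e x y]|.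

(* edge set: unordered pairs, represented as ordered pairs (x,y) with x < y *)
Definition edges e : {set 'I_n * 'I_n} :=
  [set p : 'I_n * 'I_n | (p.1 < p.2)%N && e p.1 p.2].

Definition num_edges e : nat := #|edges e|.

Definition chemical e : Prop := forall x : 'I_n, (deg e x <= 4)%N.

Definition bicyclic e : Prop :=
  simple_graph e /\ connected_graph e /\ num_edges e = n.+1.

Definition chemical_bicyclic e : Prop := bicyclic e /\ chemical e.

Definition nv e (i : nat) : nat := #|[set x | deg e x == i]|.

Definition me e (i j : nat) : nat :=
  #|[set p in edges e |
      ((deg e p.1 == i) && (deg e p.2 == j)) ||
      ((deg e p.1 == j) && (deg e p.2 == i))]|.

Definition SO (R : rcfType) e : R :=
  \sum_(p in edges e) Num.sqrt (((deg e p.1)%:R ^+ 2 + (deg e p.2)%:R ^+ 2) : R).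

Definition beta2 e : Prop :=
  [/\ nv e 4 = 0, nv e 3 = 2, nv e 2 = n - 2, nv e 1 = 0 &
   (me e 1 1 = 0
       /\ me e 1 2 = 0
       /\ me e 1 3 = 0
       /\ me e 1 4 = 0 /\
       me e 2 2 = n - 4
       /\ me e 2 3 = 4
       /\ me e 2 4 = 0 /\
       me e 3 3 = 1
       /\ me e 3 4 = 0 /\ me e 4 4 = 0)].

Definition beta3 e : Prop :=
  [/\ nv e 4 = 0, nv e 3 = 2, nv e 2 = n - 2, nv e 1 = 0 &
   (me e 1 1 = 0
       /\ me e 1 2 = 0
       /\ me e 1 3 = 0
       /\ me e 1 4 = 0 /\
       me e 2 2 = n - 5
       /\ me e 2 3 = 6
       /\ me e 2 4 = 0 /\
       me e 3 3 = 0
       /\ me e 3 4 = 0 /\ me e 4 4 = 0)].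

Definition beta9 e : Prop :=
  [/\ nv e 4 = 0, nv e 3 = 3, nv e 2 = n - 4, nv e 1 = 1 &
   (me e 1 1 = 0
       /\ me e 1 2 = 1
       /\ me e 1 3 = 0
       /\ me e 1 4 = 0 /\
       me e 2 2 = n - 6
       /\ me e 2 3 = 3
       /\ me e 2 4 = 0 /\
       me e 3 3 = 3
       /\ me e 3 4 = 0 /\ me e 4 4 = 0)].

End Graphs.

(* Main.v *)
Require Import Defs.
From mathcomp Require Import all_boot all_order all_algebra.
From mathcomp Require Import ring lra zify.
Import Order.TTheory GRing.Theory Num.Theory.
Set Implicit Arguments. Unset Strict Implicit. Unset Printing Implicit Defensive.

Lemma card_sum (T : finType) (A : {set T}) (P : pred T) :
  #|[set x in A | P x]| = \sum_(x in A) (P x : nat).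
Proof.
rewrite -sum1_card big_mkcond [RHS]big_mkcond /=.
apply: eq_bigr => x _; rewrite !inE; by case: (x \in A); case: (P x).
Qed.

Lemma card_sumT (T : finType) (P : pred T) :
  #|[set x | P x]| = \sum_x (P x : nat).
Proof.
rewrite -sum1_card big_mkcond /=.
apply: eq_bigr => x _; rewrite !inE; by case: (P x).
Qed.

Section Count.
Variable n : nat.
Variable e : rel 'I_n.
Hypothesis esym : symmetric e.
Hypothesis eirr : irreflexive e.

Lemma deg_sum x : deg e x = \sum_(y | e x y) 1.
Proof. by rewrite /deg -sum1_card; apply: eq_bigl => y; rewrite inE. Qed.

Lemma handshake (G : 'I_n -> 'I_n -> nat) :
  \sum_x \sum_(y | e x y) G x y = \sum_(p in edges e) (G p.1 p.2 + G p.2 p.1).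
Proof.
rewrite pair_big_dep /= (bigID (fun p : 'I_n * 'I_n => (p.1 < p.2)%N)) /=.
rewrite big_split /=; congr (_ + _).
  by apply: eq_bigl => p; rewrite /edges inE andbC.
rewrite (reindex_inj (h := fun p : 'I_n * 'I_n => (p.2, p.1))); last first.
  by move=> [a b] [c d] /= [-> ->].
apply: eq_bigl => [[a b]] /=; rewrite /edges inE /= (esym b a).
have := eirr a; case: (ltngtP a b) => hh hirr /=; rewrite ?andbT ?andbF //.
by move: hirr; rewrite (val_inj hh).
Qed.

Lemma sum_deg_eq (i : nat) :
  (i * nv e i = \sum_(p in edges e) ((deg e p.1 == i) + (deg e p.2 == i)))%N.
Proof.
rewrite -(handshake (fun x y => (deg e x == i) : nat)).
rewrite /nv card_sumT big_distrr /=.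
rewrite [RHS](eq_bigr (fun x => (deg e x == i) * deg e x)%N); last first.
  by move=> x _; rewrite deg_sum big_distrr /= muln1.
apply: eq_bigr => x _.
by case: (deg e x =P i) => [->|]; rewrite ?muln1 ?mul1n ?muln0 ?mul0n.
Qed.

Lemma me_sum i j : me e i j = \sum_(p in edges e)
   (((deg e p.1 == i) && (deg e p.2 == j)) || ((deg e p.1 == j) && (deg e p.2 == i)) : nat).
Proof. by rewrite /me card_sum. Qed.

Lemma mii_bound i : (2 * me e i i + nv e i <= nv e i * nv e i)%N.
Proof.
set f := fun x : 'I_n => ((deg e x == i) : nat).
have hQ : (me e i i <= \sum_(x : 'I_n) \sum_(y : 'I_n) ((x < y)%N * f x * f y))%N.
  rewrite me_sum pair_bigA /= big_mkcond /=; apply: leq_sum => p _.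
  by rewrite /edges inE /f; case: (p.1 < p.2)%N => /=; case: (e p.1 p.2); case: (deg e p.1 == i); case: (deg e p.2 == i).
have hnv : nv e i = \sum_x f x by rewrite /nv card_sumT.
suff: (2 * \sum_(x : 'I_n) \sum_(y : 'I_n) ((x < y)%N * f x * f y) + nv e i = nv e i * nv e i)%N by move: hQ; lia.
rewrite hnv big_distrl /=.
have -> : (\sum_x f x * \sum_x f x = \sum_(x : 'I_n) \sum_(y : 'I_n) (((x < y)%N + (y < x)%N + (x == y)) * f x * f y))%N.
  apply: eq_bigr => x _; rewrite big_distrr /=; apply: eq_bigr => y _.
  have -> : ((x < y)%N + (y < x)%N + (x == y) = 1)%N.
    by rewrite -val_eqE /=; case: (ltngtP x y).
  by rewrite mul1n mulnC.
have -> : (\sum_(x : 'I_n) \sum_(y : 'I_n) (((x < y)%N + (y < x)%N + (x == y)) * f x * f y) =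
   \sum_(x : 'I_n) \sum_(y : 'I_n) ((x < y)%N * f x * f y) + \sum_(x : 'I_n) \sum_(y : 'I_n) ((y < x)%N * f x * f y)
   + \sum_(x : 'I_n) \sum_(y : 'I_n) ((x == y) * f x * f y))%N.
  rewrite -!big_split; apply: eq_bigr => x _; rewrite -!big_split; apply: eq_bigr => y _.
  by rewrite !mulnDl.
rewrite mul2n -addnn -!addnA; congr (_ + _); congr (_ + _).
  rewrite exchange_big /=; apply: eq_bigr => x _; apply: eq_bigr => y _; lia.
apply: eq_bigr => x _.
rewrite (bigD1 x) //= big1 ?eqxx; last by move=> y /negbTE; rewrite eq_sym => ->.
by rewrite /f; case: (_ == i).
Qed.

End Count.

Definition ty (a b i j : nat) : nat := (((a == i) && (b == j)) || ((a == j) && (b == i))).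

Lemma ty_sum1 a b : (1 <= a <= 4)%N -> (1 <= b <= 4)%N ->
  (ty a b 1 1 + ty a b 1 2 + ty a b 1 3 + ty a b 1 4 + ty a b 2 2 + ty a b 2 3 + ty a b 2 4
   + ty a b 3 3 + ty a b 3 4 + ty a b 4 4 = 1)%N.
Proof.
by case: a => [|[|[|[|[|a]]]]] //; case: b => [|[|[|[|[|b]]]]].
Qed.

Lemma ty_deg a b : (1 <= a <= 4)%N -> (1 <= b <= 4)%N ->
  [/\ ((a == 1) + (b == 1) = 2 * ty a b 1 1 + ty a b 1 2 + ty a b 1 3 + ty a b 1 4)%N,
      ((a == 2) + (b == 2) = ty a b 1 2 + 2 * ty a b 2 2 + ty a b 2 3 + ty a b 2 4)%N,
      ((a == 3) + (b == 3) = ty a b 1 3 + ty a b 2 3 + 2 * ty a b 3 3 + ty a b 3 4)%N &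
      ((a == 4) + (b == 4) = ty a b 1 4 + ty a b 2 4 + ty a b 3 4 + 2 * ty a b 4 4)%N].
Proof.
by case: a => [|[|[|[|[|a]]]]] //; case: b => [|[|[|[|[|b]]]]].
Qed.

Section W.
Variable R : rcfType.
Local Open Scope ring_scope.
Definition w (i j : nat) : R := Num.sqrt ((i%:R) ^+ 2 + (j%:R) ^+ 2).

Lemma ty_w a b : (1 <= a <= 4)%N -> (1 <= b <= 4)%N ->
  w a b = (ty a b 1 1)%:R * w 1 1 + (ty a b 1 2)%:R * w 1 2 + (ty a b 1 3)%:R * w 1 3
   + (ty a b 1 4)%:R * w 1 4 + (ty a b 2 2)%:R * w 2 2 + (ty a b 2 3)%:R * w 2 3
   + (ty a b 2 4)%:R * w 2 4 + (ty a b 3 3)%:R * w 3 3 + (ty a b 3 4)%:R * w 3 4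
   + (ty a b 4 4)%:R * w 4 4.
Proof.
rewrite /ty.
case: a => [|[|[|[|[|a]]]]] //; case: b => [|[|[|[|[|b]]]]] //= _ _;
  rewrite ?mul0r ?mul1r ?add0r ?addr0 //= /w addrC //.
Qed.
End W.

Lemma deg_ge1 n (e : rel 'I_n) : (2 <= n)%N -> connected_graph e -> forall x, (1 <= deg e x)%N.
Proof.
move=> hn hc x.
have [y hxy] : exists y : 'I_n, y != x.
  have h0 : (0 < n)%N by lia.
  have h1 : (1 < n)%N by lia.
  case: (eqVneq (Ordinal h0) x) => [<-|h]; last by exists (Ordinal h0).
  by exists (Ordinal h1); rewrite -val_eqE.
move: (hc x y) => /connectP [[|z p]] /=; first by move=> _ hy; move: hxy; rewrite hy eqxx.
move=> /andP [hz _] _; rewrite /deg card_gt0; apply/set0Pn; exists z; by rewrite inE.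
Qed.

Section Struct.
Variable R : rcfType.
Variable n : nat.
Variable e : rel 'I_n.
Hypothesis hn : (2 <= n)%N.
Hypothesis he : chemical_bicyclic e.

Let esym : symmetric e. Proof. by case: he => [[[]]]. Qed.
Let eirr : irreflexive e. Proof. by case: he => [[[]]]. Qed.
Let hdeg x : (1 <= deg e x <= 4)%N.
Proof. case: he => [[_ [hc _]] hch]; by rewrite deg_ge1 // hch. Qed.

Lemma struct_B : (me e 1 1 + me e 1 2 + me e 1 3 + me e 1 4 + me e 2 2 + me e 2 3 + me e 2 4
   + me e 3 3 + me e 3 4 + me e 4 4 = n.+1)%N.
Proof.
case: he => [[_ [_ hE]] _]; rewrite -hE /num_edges -sum1_card !me_sum -!big_split /=.
symmetry; apply: eq_bigr => p _; symmetry; exact: (ty_sum1 (hdeg p.1) (hdeg p.2)).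
Qed.

Lemma struct_C :
  [/\ (nv e 1 = 2 * me e 1 1 + me e 1 2 + me e 1 3 + me e 1 4)%N,
      (2 * nv e 2 = me e 1 2 + 2 * me e 2 2 + me e 2 3 + me e 2 4)%N,
      (3 * nv e 3 = me e 1 3 + me e 2 3 + 2 * me e 3 3 + me e 3 4)%N &
      (4 * nv e 4 = me e 1 4 + me e 2 4 + me e 3 4 + 2 * me e 4 4)%N].
Proof.
split.
- rewrite -[nv e 1]mul1n sum_deg_eq // !me_sum !big_distrr -!big_split /=.
  by apply: eq_bigr => p _; case: (ty_deg (hdeg p.1) (hdeg p.2)).
- rewrite sum_deg_eq // !me_sum !big_distrr -!big_split /=.
  by apply: eq_bigr => p _; case: (ty_deg (hdeg p.1) (hdeg p.2)).
- rewrite sum_deg_eq // !me_sum !big_distrr -!big_split /=.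
  by apply: eq_bigr => p _; case: (ty_deg (hdeg p.1) (hdeg p.2)).
- rewrite sum_deg_eq // !me_sum !big_distrr -!big_split /=.
  by apply: eq_bigr => p _; case: (ty_deg (hdeg p.1) (hdeg p.2)).
Qed.

Lemma struct_D : (nv e 1 + nv e 2 + nv e 3 + nv e 4 = n)%N.
Proof.
rewrite /nv !card_sumT -!big_split /= -[n in RHS]card_ord -sum1_card.
apply: eq_bigr => x _; move: (hdeg x).
by case: (deg e x) => [|[|[|[|[|k]]]]].
Qed.

Local Open Scope ring_scope.
Lemma struct_A : SO R e =
  (me e 1 1)%:R * w R 1 1 + (me e 1 2)%:R * w R 1 2 + (me e 1 3)%:R * w R 1 3
   + (me e 1 4)%:R * w R 1 4 + (me e 2 2)%:R * w R 2 2 + (me e 2 3)%:R * w R 2 3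
   + (me e 2 4)%:R * w R 2 4 + (me e 3 3)%:R * w R 3 3 + (me e 3 4)%:R * w R 3 4
   + (me e 4 4)%:R * w R 4 4.
Proof.
rewrite /SO !me_sum !natr_sum !mulr_suml -!big_split /=.
apply: eq_bigr => p _; exact: (ty_w R (hdeg p.1) (hdeg p.2)).
Qed.

End Struct.


Lemma cases_nat (m11 m12 m13 m14 m22 m23 m24 m33 m34 m44 n1 n2 n3 n4 n : nat) :
  (6 <= n)%N ->
  (m11 + m12 + m13 + m14 + m22 + m23 + m24 + m33 + m34 + m44 = n.+1)%N ->
  (n1 = 2 * m11 + m12 + m13 + m14)%N ->
  (2 * n2 = m12 + 2 * m22 + m23 + m24)%N ->
  (3 * n3 = m13 + m23 + 2 * m33 + m34)%N ->
  (4 * n4 = m14 + m24 + m34 + 2 * m44)%N ->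
  (n1 + n2 + n3 + n4 = n)%N ->
  (2 * m33 + n3 <= n3 * n3)%N ->
  (2 * m44 + n4 <= n4 * n4)%N ->
  ~ [/\ n4 = 0, n3 = 2, n2 = n - 2, n1 = 0 &
       (m11 = 0 /\ m12 = 0 /\ m13 = 0 /\ m14 = 0 /\ m22 = n - 4 /\ m23 = 4 /\ m24 = 0 /\
        m33 = 1 /\ m34 = 0 /\ m44 = 0)]%N ->
  ~ [/\ n4 = 0, n3 = 2, n2 = n - 2, n1 = 0 &
       (m11 = 0 /\ m12 = 0 /\ m13 = 0 /\ m14 = 0 /\ m22 = n - 5 /\ m23 = 6 /\ m24 = 0 /\
        m33 = 0 /\ m34 = 0 /\ m44 = 0)]%N ->
  ~ [/\ n4 = 0, n3 = 3, n2 = n - 4, n1 = 1 &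
       (m11 = 0 /\ m12 = 1 /\ m13 = 0 /\ m14 = 0 /\ m22 = n - 6 /\ m23 = 3 /\ m24 = 0 /\
        m33 = 3 /\ m34 = 0 /\ m44 = 0)]%N ->
  (1 <= m11 + m13 + m14)%N \/ (2 <= m12)%N \/ (1 <= m12 /\ 4 <= m24 + m34)%N \/
      (4 <= m24)%N \/ (1 <= m12 /\ 5 <= m23)%N.
Proof.
move=> hn hB hC1 hC2 hC3 hC4 hD hE3 hE4 nb2 nb3 nb9.
have hE3a : (n3 <= 2 -> m33 <= 1)%N by move=> h; nia.
have hE3b : (n3 <= 3 -> m33 <= 3)%N by move=> h; nia.
have hE4a : (n4 <= 1 -> m44 = 0)%N by move=> h; nia.
clear hE3 hE4.
case: (leqP 1 (m11 + m13 + m14)) => h1; first by left.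
case: (leqP 2 m12) => h2; first by right; left.
have e11 : m11 = 0%N by lia.
have e13 : m13 = 0%N by lia.
have e14 : m14 = 0%N by lia.
have hsum : (n3 + 2 * n4 = 2 + m12)%N by lia.
case: (leqP 1 n4) => h4.
  case: (leqP 1 m12) => h12.
    right; right; left; lia.
  right; right; right; left; lia.
have e4 : n4 = 0%N by lia.
case: (leqP 1 m12) => h12.
  have e3 : n3 = 3%N by lia.
  case: (leqP 3 m33) => h33.
    exfalso; apply: nb9; split; lia.
  right; right; right; right; lia.
have e3 : n3 = 2%N by lia.
case: (leqP 1 m33) => h33.
  exfalso; apply: nb2; split; lia.
exfalso; apply: nb3; split; lia.
Qed.

Local Open Scope ring_scope.

Lemma final_R (R : rcfType) (M11 M12 M13 M14 M22 M23 M24 M33 M34 M44 N1 N2 N3 N4 N : R)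
  (d11 d12 d13 d14 d23 d24 d33 d34 d44 : R)
  (L11 : (- (((((1 * 10 + 4) * 10 + 1) * 10 + 5) * 10 + 0) / 10 / 10 / 10 / 10)) <= d11)
  (L12 : (- ((((5 * 10 + 9) * 10 + 3) * 10 + 0) / 10 / 10 / 10 / 10)) <= d12)
  (L13 : ((((3 * 10 + 3) * 10 + 3) * 10 + 0) / 10 / 10 / 10 / 10) <= d13)
  (L14 : (((((1 * 10 + 2) * 10 + 9) * 10 + 4) * 10 + 0) / 10 / 10 / 10 / 10) <= d14)
  (L23 : ((((7 * 10 + 7) * 10 + 7) * 10 + 0) / 10 / 10 / 10 / 10) <= d23)
  (L24 : (((((1 * 10 + 6) * 10 + 4) * 10 + 3) * 10 + 0) / 10 / 10 / 10 / 10) <= d24)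
  (L33 : (((((1 * 10 + 4) * 10 + 1) * 10 + 4) * 10 + 0) / 10 / 10 / 10 / 10) <= d33)
  (L34 : (((((2 * 10 + 1) * 10 + 7) * 10 + 1) * 10 + 0) / 10 / 10 / 10 / 10) <= d34)
  (L44 : (((((2 * 10 + 8) * 10 + 2) * 10 + 8) * 10 + 0) / 10 / 10 / 10 / 10) <= d44)
  (U12 : d12 <= (- ((((5 * 10 + 9) * 10 + 2) * 10 + 0) / 10 / 10 / 10 / 10)))
  (U23 : d23 <= ((((7 * 10 + 7) * 10 + 8) * 10 + 0) / 10 / 10 / 10 / 10))
  (U33 : d33 <= (((((1 * 10 + 4) * 10 + 1) * 10 + 5) * 10 + 0) / 10 / 10 / 10 / 10))
  (rB : M11 + M12 + M13 + M14 + M22 + M23 + M24 + M33 + M34 + M44 = N + 1)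
  (r1 : N1 = 2 * M11 + M12 + M13 + M14)
  (r2 : 2 * N2 = M12 + 2 * M22 + M23 + M24)
  (r3 : 3 * N3 = M13 + M23 + 2 * M33 + M34)
  (r4 : 4 * N4 = M14 + M24 + M34 + 2 * M44)
  (rD : N1 + N2 + N3 + N4 = N)
  (p11 : 0 <= M11)
  (p12 : 0 <= M12)
  (p13 : 0 <= M13)
  (p14 : 0 <= M14)
  (p22 : 0 <= M22)
  (p23 : 0 <= M23)
  (p24 : 0 <= M24)
  (p33 : 0 <= M33)
  (p34 : 0 <= M34)
  (p44 : 0 <= M44) :
  (1 <= M11 + M13 + M14) \/ (2 <= M12) \/ (1 <= M12 /\ 4 <= M24 + M34) \/ (4 <= M24) \/ (1 <= M12 /\ 5 <= M23) -> d12 + 3 * d23 + 3 * d33 < M11 * d11 + M12 * d12 + M13 * d13 + M14 * d14 + M23 * d23 + M24 * d24 + M33 * d33 + M34 * d34 + M44 * d44.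
Proof.
have hk : N3 + 2 * N4 - N1 = 2.
  clear -rB r1 r2 r3 r4 rD. lra.
have e : M11 * (- (((((1 * 10 + 4) * 10 + 1) * 10 + 5) * 10 + 0) / 10 / 10 / 10 / 10)) + M12 * (- ((((5 * 10 + 9) * 10 + 3) * 10 + 0) / 10 / 10 / 10 / 10)) + M13 * ((((3 * 10 + 3) * 10 + 3) * 10 + 0) / 10 / 10 / 10 / 10) + M14 * (((((1 * 10 + 2) * 10 + 9) * 10 + 4) * 10 + 0) / 10 / 10 / 10 / 10) + M23 * ((((7 * 10 + 7) * 10 + 7) * 10 + 0) / 10 / 10 / 10 / 10) + M24 * (((((1 * 10 + 6) * 10 + 4) * 10 + 3) * 10 + 0) / 10 / 10 / 10 / 10) + M33 * (((((1 * 10 + 4) * 10 + 1) * 10 + 4) * 10 + 0) / 10 / 10 / 10 / 10) + M34 * (((((2 * 10 + 1) * 10 + 7) * 10 + 1) * 10 + 0) / 10 / 10 / 10 / 10) + M44 * (((((2 * 10 + 8) * 10 + 2) * 10 + 8) * 10 + 0) / 10 / 10 / 10 / 10) = (((((4 * 10 + 2) * 10 + 4) * 10 + 2) * 10 + 0) / 10 / 10 / 10 / 10) + M11 * (((((2 * 10 + 8) * 10 + 2) * 10 + 7) * 10 + 0) / 10 / 10 / 10 / 10) + M12 * (((((1 * 10 + 5) * 10 + 2) * 10 + 8) * 10 + 0) / 10 / 10 / 10 / 10) + M13 * (((((1 * 10 + 7) * 10 + 4) * 10 + 7) * 10 + 0) / 10 / 10 / 10 / 10) + M14 * (((((2 *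 10 + 3) * 10 + 5) * 10 + 4) * 10 + 5) / 10 / 10 / 10 / 10) + M23 * (((7 * 10 + 0) * 10 + 0) / 10 / 10 / 10 / 10) + M24 * ((((5 * 10 + 8) * 10 + 2) * 10 + 5) / 10 / 10 / 10 / 10) + M34 * ((((4 * 10 + 0) * 10 + 3) * 10 + 5) / 10 / 10 / 10 / 10) + M44 * ((((7 * 10 + 0) * 10 + 7) * 10 + 0) / 10 / 10 / 10 / 10).
  clear -r1 r3 r4 hk. lra.
have S1 : M11 * (- (((((1 * 10 + 4) * 10 + 1) * 10 + 5) * 10 + 0) / 10 / 10 / 10 / 10)) + M12 * (- ((((5 * 10 + 9) * 10 + 3) * 10 + 0) / 10 / 10 / 10 / 10)) + M13 * ((((3 * 10 + 3) * 10 + 3) * 10 + 0) / 10 / 10 / 10 / 10) + M14 * (((((1 * 10 + 2) * 10 + 9) * 10 + 4) * 10 + 0) / 10 / 10 / 10 / 10) + M23 * ((((7 * 10 + 7) * 10 + 7) * 10 + 0) / 10 / 10 / 10 / 10) + M24 * (((((1 * 10 + 6) * 10 + 4) * 10 + 3) * 10 + 0) / 10 / 10 / 10 / 10) + M33 * (((((1 * 10 + 4) * 10 + 1) * 10 + 4) * 10 + 0) / 10 / 10 / 10 / 10) + M34 * (((((2 * 10 + 1) * 10 + 7) * 10 + 1) * 10 + 0) / 10 / 10 / 10 / 10) + M44 * (((((2 * 10 + 8) * 10 + 2) * 10 + 8) * 10 + 0) / 10 / 10 / 10 / 10) <= M11 * d11 + M12 * d12 + M13 * d13 + M14 * d14 +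 M23 * d23 + M24 * d24 + M33 * d33 + M34 * d34 + M44 * d44.
have t11 := ler_wpM2l p11 L11.
have t12 := ler_wpM2l p12 L12.
have t13 := ler_wpM2l p13 L13.
have t14 := ler_wpM2l p14 L14.
have t23 := ler_wpM2l p23 L23.
have t24 := ler_wpM2l p24 L24.
have t33 := ler_wpM2l p33 L33.
have t34 := ler_wpM2l p34 L34.
have t44 := ler_wpM2l p44 L44.
  clear -t11 t12 t13 t14 t23 t24 t33 t34 t44. lra.
clear -e S1 U12 U23 U33 p11 p12 p13 p14 p22 p23 p24 p33 p34 p44.
case=> [h|[h|[[h h']|[h|[h h']]]]].
- lra.
- lra.
- lra.
- lra.
- lra.
Qed.

Lemma sqrt_lb {R : rcfType} {s a k : R} : 0 <= s -> s ^+ 2 = k -> 0 <= a -> a * a <= k -> a <= s.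
Proof. move=> h0 h1 h2 h3; rewrite expr2 in h1; nra. Qed.
Lemma sqrt_ub {R : rcfType} {s a k : R} : 0 <= s -> s ^+ 2 = k -> 0 <= a -> k <= a * a -> s <= a.
Proof. move=> h0 h1 h2 h3; rewrite expr2 in h1; nra. Qed.

Lemma w_ge0 (R : rcfType) i j : 0 <= w R i j.
Proof. exact: sqrtr_ge0. Qed.
Lemma w_sq (R : rcfType) i j : w R i j ^+ 2 = i%:R * i%:R + j%:R * j%:R.
Proof.
rewrite /w sqr_sqrtr; first by rewrite !expr2.
by rewrite addr_ge0 // exprn_ge0.
Qed.

Lemma dbounds (R : rcfType) :
  (- (((((1 * 10 + 4) * 10 + 1) * 10 + 5) * 10 + 0) / 10 / 10 / 10 / 10)) <= w R 1 1 - w R 2 2 /\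
  (- ((((5 * 10 + 9) * 10 + 3) * 10 + 0) / 10 / 10 / 10 / 10)) <= w R 1 2 - w R 2 2 /\
  ((((3 * 10 + 3) * 10 + 3) * 10 + 0) / 10 / 10 / 10 / 10) <= w R 1 3 - w R 2 2 /\
  (((((1 * 10 + 2) * 10 + 9) * 10 + 4) * 10 + 0) / 10 / 10 / 10 / 10) <= w R 1 4 - w R 2 2 /\
  ((((7 * 10 + 7) * 10 + 7) * 10 + 0) / 10 / 10 / 10 / 10) <= w R 2 3 - w R 2 2 /\
  (((((1 * 10 + 6) * 10 + 4) * 10 + 3) * 10 + 0) / 10 / 10 / 10 / 10) <= w R 2 4 - w R 2 2 /\
  (((((1 * 10 + 4) * 10 + 1) * 10 + 4) * 10 + 0) / 10 / 10 / 10 / 10) <= w R 3 3 - w R 2 2 /\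
  (((((2 * 10 + 1) * 10 + 7) * 10 + 1) * 10 + 0) / 10 / 10 / 10 / 10) <= w R 3 4 - w R 2 2 /\
  (((((2 * 10 + 8) * 10 + 2) * 10 + 8) * 10 + 0) / 10 / 10 / 10 / 10) <= w R 4 4 - w R 2 2 /\
  w R 1 2 - w R 2 2 <= (- ((((5 * 10 + 9) * 10 + 2) * 10 + 0) / 10 / 10 / 10 / 10)) /\
  w R 2 3 - w R 2 2 <= ((((7 * 10 + 7) * 10 + 8) * 10 + 0) / 10 / 10 / 10 / 10) /\
  w R 3 3 - w R 2 2 <= (((((1 * 10 + 4) * 10 + 1) * 10 + 5) * 10 + 0) / 10 / 10 / 10 / 10).
Proof.
have l11 : (((((1 * 10 + 4) * 10 + 1) * 10 + 4) * 10 + 2) / 10 / 10 / 10 / 10) <= w R 1 1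
  by clear -R; apply: (sqrt_lb (w_ge0 R 1 1) (w_sq R 1 1)); lra.
have u11 : w R 1 1 <= (((((1 * 10 + 4) * 10 + 1) * 10 + 4) * 10 + 3) / 10 / 10 / 10 / 10)
  by clear -R; apply: (sqrt_ub (w_ge0 R 1 1) (w_sq R 1 1)); lra.
have l12 : (((((2 * 10 + 2) * 10 + 3) * 10 + 6) * 10 + 0) / 10 / 10 / 10 / 10) <= w R 1 2
  by clear -R; apply: (sqrt_lb (w_ge0 R 1 2) (w_sq R 1 2)); lra.
have u12 : w R 1 2 <= (((((2 * 10 + 2) * 10 + 3) * 10 + 6) * 10 + 1) / 10 / 10 / 10 / 10)
  by clear -R; apply: (sqrt_ub (w_ge0 R 1 2) (w_sq R 1 2)); lra.
have l13 : (((((3 * 10 + 1) * 10 + 6) * 10 + 2) * 10 + 2) / 10 / 10 / 10 / 10) <= w R 1 3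
  by clear -R; apply: (sqrt_lb (w_ge0 R 1 3) (w_sq R 1 3)); lra.
have u13 : w R 1 3 <= (((((3 * 10 + 1) * 10 + 6) * 10 + 2) * 10 + 3) / 10 / 10 / 10 / 10)
  by clear -R; apply: (sqrt_ub (w_ge0 R 1 3) (w_sq R 1 3)); lra.
have l14 : (((((4 * 10 + 1) * 10 + 2) * 10 + 3) * 10 + 1) / 10 / 10 / 10 / 10) <= w R 1 4
  by clear -R; apply: (sqrt_lb (w_ge0 R 1 4) (w_sq R 1 4)); lra.
have u14 : w R 1 4 <= (((((4 * 10 + 1) * 10 + 2) * 10 + 3) * 10 + 2) / 10 / 10 / 10 / 10)
  by clear -R; apply: (sqrt_ub (w_ge0 R 1 4) (w_sq R 1 4)); lra.
have l22 : (((((2 * 10 + 8) * 10 + 2) * 10 + 8) * 10 + 4) / 10 / 10 / 10 / 10) <= w R 2 2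
  by clear -R; apply: (sqrt_lb (w_ge0 R 2 2) (w_sq R 2 2)); lra.
have u22 : w R 2 2 <= (((((2 * 10 + 8) * 10 + 2) * 10 + 8) * 10 + 5) / 10 / 10 / 10 / 10)
  by clear -R; apply: (sqrt_ub (w_ge0 R 2 2) (w_sq R 2 2)); lra.
have l23 : (((((3 * 10 + 6) * 10 + 0) * 10 + 5) * 10 + 5) / 10 / 10 / 10 / 10) <= w R 2 3
  by clear -R; apply: (sqrt_lb (w_ge0 R 2 3) (w_sq R 2 3)); lra.
have u23 : w R 2 3 <= (((((3 * 10 + 6) * 10 + 0) * 10 + 5) * 10 + 6) / 10 / 10 / 10 / 10)
  by clear -R; apply: (sqrt_ub (w_ge0 R 2 3) (w_sq R 2 3)); lra.
have l24 : (((((4 * 10 + 4) * 10 + 7) * 10 + 2) * 10 + 1) / 10 / 10 / 10 / 10) <= w R 2 4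
  by clear -R; apply: (sqrt_lb (w_ge0 R 2 4) (w_sq R 2 4)); lra.
have u24 : w R 2 4 <= (((((4 * 10 + 4) * 10 + 7) * 10 + 2) * 10 + 2) / 10 / 10 / 10 / 10)
  by clear -R; apply: (sqrt_ub (w_ge0 R 2 4) (w_sq R 2 4)); lra.
have l33 : (((((4 * 10 + 2) * 10 + 4) * 10 + 2) * 10 + 6) / 10 / 10 / 10 / 10) <= w R 3 3
  by clear -R; apply: (sqrt_lb (w_ge0 R 3 3) (w_sq R 3 3)); lra.
have u33 : w R 3 3 <= (((((4 * 10 + 2) * 10 + 4) * 10 + 2) * 10 + 7) / 10 / 10 / 10 / 10)
  by clear -R; apply: (sqrt_ub (w_ge0 R 3 3) (w_sq R 3 3)); lra.
have l34 : (((((5 * 10 + 0) * 10 + 0) * 10 + 0) * 10 + 0) / 10 / 10 / 10 / 10) <= w R 3 4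
  by clear -R; apply: (sqrt_lb (w_ge0 R 3 4) (w_sq R 3 4)); lra.
have u34 : w R 3 4 <= (((((5 * 10 + 0) * 10 + 0) * 10 + 0) * 10 + 0) / 10 / 10 / 10 / 10)
  by clear -R; apply: (sqrt_ub (w_ge0 R 3 4) (w_sq R 3 4)); lra.
have l44 : (((((5 * 10 + 6) * 10 + 5) * 10 + 6) * 10 + 8) / 10 / 10 / 10 / 10) <= w R 4 4
  by clear -R; apply: (sqrt_lb (w_ge0 R 4 4) (w_sq R 4 4)); lra.
have u44 : w R 4 4 <= (((((5 * 10 + 6) * 10 + 5) * 10 + 6) * 10 + 9) / 10 / 10 / 10 / 10)
  by clear -R; apply: (sqrt_ub (w_ge0 R 4 4) (w_sq R 4 4)); lra.
have c0 : (- (((((1 * 10 + 4) * 10 + 1) * 10 + 5) * 10 + 0) / 10 / 10 / 10 / 10)) <= w R 1 1 - w R 2 2 by clear -l11 u22; lra.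
have c1 : (- ((((5 * 10 + 9) * 10 + 3) * 10 + 0) / 10 / 10 / 10 / 10)) <= w R 1 2 - w R 2 2 by clear -l12 u22; lra.
have c2 : ((((3 * 10 + 3) * 10 + 3) * 10 + 0) / 10 / 10 / 10 / 10) <= w R 1 3 - w R 2 2 by clear -l13 u22; lra.
have c3 : (((((1 * 10 + 2) * 10 + 9) * 10 + 4) * 10 + 0) / 10 / 10 / 10 / 10) <= w R 1 4 - w R 2 2 by clear -l14 u22; lra.
have c4 : ((((7 * 10 + 7) * 10 + 7) * 10 + 0) / 10 / 10 / 10 / 10) <= w R 2 3 - w R 2 2 by clear -l23 u22; lra.
have c5 : (((((1 * 10 + 6) * 10 + 4) * 10 + 3) * 10 + 0) / 10 / 10 / 10 / 10) <= w R 2 4 - w R 2 2 by clear -l24 u22; lra.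
have c6 : (((((1 * 10 + 4) * 10 + 1) * 10 + 4) * 10 + 0) / 10 / 10 / 10 / 10) <= w R 3 3 - w R 2 2 by clear -l33 u22; lra.
have c7 : (((((2 * 10 + 1) * 10 + 7) * 10 + 1) * 10 + 0) / 10 / 10 / 10 / 10) <= w R 3 4 - w R 2 2 by clear -l34 u22; lra.
have c8 : (((((2 * 10 + 8) * 10 + 2) * 10 + 8) * 10 + 0) / 10 / 10 / 10 / 10) <= w R 4 4 - w R 2 2 by clear -l44 u22; lra.
have c9 : w R 1 2 - w R 2 2 <= (- ((((5 * 10 + 9) * 10 + 2) * 10 + 0) / 10 / 10 / 10 / 10)) by clear -u12 l22; lra.
have c10 : w R 2 3 - w R 2 2 <= ((((7 * 10 + 7) * 10 + 8) * 10 + 0) / 10 / 10 / 10 / 10) by clear -u23 l22; lra.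
have c11 : w R 3 3 - w R 2 2 <= (((((1 * 10 + 4) * 10 + 1) * 10 + 5) * 10 + 0) / 10 / 10 / 10 / 10) by clear -u33 l22; lra.
by repeat split.
Qed.


Lemma SO_delta (R : rcfType) n (e : rel 'I_n) : (2 <= n)%N -> chemical_bicyclic e ->
  SO R e = n.+1%:R * w R 2 2 + (me e 1 1)%:R * (w R 1 1 - w R 2 2)
    + (me e 1 2)%:R * (w R 1 2 - w R 2 2) + (me e 1 3)%:R * (w R 1 3 - w R 2 2)
    + (me e 1 4)%:R * (w R 1 4 - w R 2 2) + (me e 2 3)%:R * (w R 2 3 - w R 2 2)
    + (me e 2 4)%:R * (w R 2 4 - w R 2 2) + (me e 3 3)%:R * (w R 3 3 - w R 2 2)
    + (me e 3 4)%:R * (w R 3 4 - w R 2 2) + (me e 4 4)%:R * (w R 4 4 - w R 2 2).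
Proof.
move=> hn he; rewrite (struct_A R hn he).
move: (congr1 (fun k : nat => k%:R : R) (struct_B hn he)); rewrite /= !natrD => hB.
rewrite -hB; ring.
Qed.

Theorem theorem3p9 (R : rcfType) (n : nat) (e1 e2 e3 e : rel 'I_n) :
  (6 <= n)%N ->
  chemical_bicyclic e1 -> beta2 e1 ->
  chemical_bicyclic e2 -> beta3 e2 ->
  chemical_bicyclic e3 -> beta9 e3 ->
  chemical_bicyclic e -> ~ beta2 e -> ~ beta3 e -> ~ beta9 e ->
  SO R e1 < SO R e2 /\ SO R e2 < SO R e3 /\ SO R e3 < SO R e.
Proof.
move=> hn h1 b1 h2 b2 h3 b3 h nb2 nb3 nb9.
have hn2 : (2 <= n)%N by lia.
have [c0 [c1 [c2 [c3 [c4 [c5 [c6 [c7 [c8 [c9 [c10 c11]]]]]]]]]]] := dbounds R.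
rewrite (SO_delta R hn2 h1) (SO_delta R hn2 h2) (SO_delta R hn2 h3) (SO_delta R hn2 h).
case: b1 => _ _ _ _ [-> [-> [-> [-> [_ [-> [-> [-> [-> ->]]]]]]]]].
case: b2 => _ _ _ _ [-> [-> [-> [-> [_ [-> [-> [-> [-> ->]]]]]]]]].
case: b3 => _ _ _ _ [-> [-> [-> [-> [_ [-> [-> [-> [-> ->]]]]]]]]].
split; [|split].
- clear -c4 c6 c9 c10 c11; lra.
- clear -c1 c4 c6 c9 c10 c11; lra.
case: (struct_C hn2 h) => C1 C2 C3 C4.
have hc := cases_nat hn (struct_B hn2 h) C1 C2 C3 C4 (struct_D hn2 h)
   (mii_bound e 3) (mii_bound e 4) nb2 nb3 nb9.
have hB := struct_B hn2 h; rewrite -addn1 in hB.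
have hD := struct_D hn2 h.
move: hB hD C1 C2 C3 C4 hc.
set m11 := me e 1 1; set m12 := me e 1 2; set m13 := me e 1 3; set m14 := me e 1 4.
set m22 := me e 2 2; set m23 := me e 2 3; set m24 := me e 2 4; set m33 := me e 3 3.
set m34 := me e 3 4; set m44 := me e 4 4.
set v1 := nv e 1; set v2 := nv e 2; set v3 := nv e 3; set v4 := nv e 4.
move=> hB hD C1 C2 C3 C4 hc.
have := @final_R R m11%:R m12%:R m13%:R m14%:R m22%:R m23%:R m24%:R m33%:R m34%:R m44%:R
  v1%:R v2%:R v3%:R v4%:R n%:R
  (w R 1 1 - w R 2 2) (w R 1 2 - w R 2 2) (w R 1 3 - w R 2 2) (w R 1 4 - w R 2 2)
  (w R 2 3 - w R 2 2) (w R 2 4 - w R 2 2) (w R 3 3 - w R 2 2) (w R 3 4 - w R 2 2)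
  (w R 4 4 - w R 2 2) c0 c1 c2 c3 c4 c5 c6 c7 c8 c9 c10 c11.
have rB : m11%:R + m12%:R + m13%:R + m14%:R + m22%:R + m23%:R + m24%:R + m33%:R + m34%:R + m44%:R
   = n%:R + 1 :> R.
  move: (congr1 (fun k : nat => k%:R : R) hB); rewrite /= !natrD => H; clear -H; lra.
have r1 : v1%:R = 2 * m11%:R + m12%:R + m13%:R + m14%:R :> R.
  move: (congr1 (fun k : nat => k%:R : R) C1); rewrite /= !natrD ?natrM => H; clear -H; lra.
have r2 : 2 * v2%:R = m12%:R + 2 * m22%:R + m23%:R + m24%:R :> R.
  move: (congr1 (fun k : nat => k%:R : R) C2); rewrite /= !natrD ?natrM => H; clear -H; lra.
have r3 : 3 * v3%:R = m13%:R + m23%:R + 2 * m33%:R + m34%:R :> R.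
  move: (congr1 (fun k : nat => k%:R : R) C3); rewrite /= !natrD ?natrM => H; clear -H; lra.
have r4 : 4 * v4%:R = m14%:R + m24%:R + m34%:R + 2 * m44%:R :> R.
  move: (congr1 (fun k : nat => k%:R : R) C4); rewrite /= !natrD ?natrM => H; clear -H; lra.
have rD : v1%:R + v2%:R + v3%:R + v4%:R = n%:R :> R.
  move: (congr1 (fun k : nat => k%:R : R) hD); rewrite /= !natrD => H; clear -H; lra.
move=> /(_ rB r1 r2 r3 r4 rD (ler0n _ _) (ler0n _ _) (ler0n _ _) (ler0n _ _) (ler0n _ _)
   (ler0n _ _) (ler0n _ _) (ler0n _ _) (ler0n _ _) (ler0n _ _)).
have hcR : (1 <= m11%:R + m13%:R + m14%:R :> R) \/ (2 <= m12%:R :> R) \/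
   (1 <= m12%:R :> R /\ 4 <= m24%:R + m34%:R :> R) \/ (4 <= m24%:R :> R) \/
   (1 <= m12%:R :> R /\ 5 <= m23%:R :> R).
  case: hc => [h0|[h0|[[h0 h0']|[h0|[h0 h0']]]]].
  - by left; move: h0; rewrite -(ler_nat R) !natrD.
  - by right; left; move: h0; rewrite -(ler_nat R).
  - by right; right; left; split; [move: h0|move: h0']; rewrite -(ler_nat R) ?natrD.
  - by right; right; right; left; move: h0; rewrite -(ler_nat R).
  - by right; right; right; right; split; [move: h0|move: h0']; rewrite -(ler_nat R).
move=> /(_ hcR) hfin.
clear -hfin; lra.
Qed.
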